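(* Let $B$ be a real $n\times n$ matrix, $n\ge2$. Then $B$ has all eigenvalues with real part $\le 0$, with exactly one complex conjugate pair $\pm i\omega$, $\omega\neq 0$, on the imaginary axis (all other eigenvalues having negative real part), if and only if $L_B|_{S_1}$ is injective, $\dim\ker(L_B|_{S_2})=1$, and the characteristic polynomial of $B$ factors as $(\tau^{n-2}+a_1\tau^{n-3}+\dots+a_{n-2})(\tau^2+b)$ with $b>0$ and first factor having all roots with negative real part. In this case the kernel of $L_B|_{S_2}$ is spanned by a positive semidefinite quadratic form $\psi$ of rank two.
   Context: $S_k$ denotes the real vector space of homogeneous polynomials of degree $k$ in $x\in\mathbb R^n$. For a linear map $x\mapsto Bx$, $L_B$ is the Lie derivative $L_B(\psi)(x)=D\psi(x)\,Bx$, which maps each $S_k$ to itself; $L_B|_{S_k}$ denotes its restriction. *)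

(* Defs.v *)
From HB Require Import structures.
From mathcomp Require Import all_boot all_order all_algebra.
Set Implicit Arguments. Unset Strict Implicit. Unset Printing Implicit Defensive.
Import Order.TTheory GRing.Theory Num.Theory.
Local Open Scope ring_scope.

(* C is an arbitrary numeric closed field (e.g. the complex
   numbers); "real" means [\is Num.real]; real matrices are
   [\is a realmx] (library notation for mxOver Num.real).  Vectors x of R^n are real column
   vectors 'cV[C]_n.

   S_1 (linear forms): psi(x) = c *m x with c a real row vector 'rV_n.
     Then L_B psi (x) = D psi(x) (B x) = c *m B *m x, so L_B|S_1 : c |-> c *m B.
   S_2 (quadratic forms): psi(x) = x^T P x with P real symmetric.
     D psi(x) v = v^T P x + x^T P v, so L_B psi (x) = x^T (B^T P + P B) x,
     i.e.  L_B|S_2 : P |-> B^T P + P B  (on symmetric P). *)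

Definition qform (C : numFieldType) n (P : 'M[C]_n) (x : 'cV[C]_n) : C :=
  (x^T *m P *m x) 0 0.

Definition S2 (C : numFieldType) n (P : 'M[C]_n) : Prop :=
  P \is a realmx /\ P^T = P.

Definition LB1 (C : numFieldType) n (B : 'M[C]_n) (c : 'rV[C]_n) : 'rV[C]_n :=
  c *m B.
Definition LB2 (C : numFieldType) n (B : 'M[C]_n) (P : 'M[C]_n) : 'M[C]_n :=
  B^T *m P + P *m B.

(* sanity check: LB2 is the Lie derivative, i.e. the t-linear coefficient of
   psi(x + t B x) *)
Lemma LB2_derivative (C : numFieldType) n (B P : 'M[C]_n) (x : 'cV[C]_n) (t : C) :
  qform P (x + t *: (B *m x)) =
  qform P x + t * qform (LB2 B P) x + t ^+ 2 * qform P (B *m x).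
Proof.
rewrite /qform /LB2 linearD /= linearZ /= !trmx_mul.
rewrite raddfD /= linearZ /= trmx_mul.
rewrite !mulmxDl -!scalemxAl !mulmxDr !mulmxDl !mulmxA.
rewrite scalerDr scalerA -expr2 !mxE !addrA mulrDr !addrA.
by [].
Qed.

Definition LB1_injective (C : numFieldType) n (B : 'M[C]_n) : Prop :=
  forall c : 'rV[C]_n, c \is a realmx -> LB1 B c = 0 -> c = 0.

Definition spans_ker_LB2 (C : numFieldType) n (B P : 'M[C]_n) : Prop :=
  [/\ S2 P, P != 0, LB2 B P = 0 &
      forall Q, S2 Q -> LB2 B Q = 0 -> exists2 r : C, r \is Num.real & Q = r *: P].

Definition dim_ker_LB2_eq1 (C : numFieldType) n (B : 'M[C]_n) : Prop :=
  exists P, spans_ker_LB2 B P.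

Definition psd (C : numFieldType) n (P : 'M[C]_n) : Prop :=
  forall x : 'cV[C]_n, x \is a realmx -> 0 <= qform P x.

(* Main.v *)
Require Import Defs.
From HB Require Import structures.
From mathcomp Require Import all_boot all_order all_algebra.
Import Order.TTheory GRing.Theory Num.Theory Num.Def.
Set Implicit Arguments. Unset Strict Implicit. Unset Printing Implicit Defensive.
Local Open Scope ring_scope.

Section Gen.
Variable F : fieldType.

Lemma char_poly_trmx n (A : 'M[F]_n) : char_poly A^T = char_poly A.
Proof.
rewrite /char_poly -det_tr; congr (\det _); apply/matrixP => i j.
by rewrite !mxE eq_sym.
Qed.

Lemma eigenvalue_trmx n (A : 'M[F]_n) a : eigenvalue A^T a = eigenvalue A a.
Proof. by rewrite !eigenvalue_root_char char_poly_trmx. Qed.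

Lemma char_poly_conj n (S A : 'M[F]_n) : S \in unitmx ->
  char_poly (S *m A *m invmx S) = char_poly A.
Proof.
move=> Su; rewrite /char_poly /char_poly_mx.
set S' := map_mx polyC S; set T' := map_mx polyC (invmx S).
have ST : S' *m T' = 1%:M by rewrite -map_mxM mulmxV // map_mx1.
have -> : 'X%:M - map_mx polyC (S *m A *m invmx S) =
          S' *m ('X%:M - map_mx polyC A) *m T'.
  rewrite !map_mxM -/S' -/T' mulmxBr mulmxBl; congr (_ - _).
  by rewrite -scalemx1 -scalemxAr mulmx1 -scalemxAl ST scalemx1.
by rewrite !det_mulmx mulrAC -det_mulmx ST det1 mul1r.
Qed.
End Gen.

Section Gen2.
Variable F : fieldType.

Lemma char_poly_lblock m l (X : 'M[F]_m) (Y : 'M[F]_(l, m)) (Z : 'M[F]_l) :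
  char_poly (block_mx X 0 Y Z) = char_poly X * char_poly Z.
Proof.
rewrite /char_poly /char_poly_mx map_block_mx /= map_mx0.
rewrite (scalar_mx_block m l 'X) opp_block_mx add_block_mx oppr0 addr0.
by rewrite det_lblock.
Qed.

Lemma char_poly_scalar2 (a : F) : char_poly (a%:M : 'M_(1+1)) = ('X - a%:P) ^+ 2.
Proof.
by rewrite char_poly_trig ?scalar_mx_is_trig // big_ord_recl big_ord1 !mxE /= expr2.
Qed.

Lemma geom_helper l (A S : 'M[F]_(1 + 1 + l)) a : row_full S ->
  usubmx S *m A = a *: usubmx S -> (('X - a%:P) ^+ 2 %| char_poly A).
Proof.
rewrite row_full_unit => Su hA.
rewrite -(char_poly_conj A Su).
set A' := S *m A *m invmx S.
have hu : usubmx A' = row_mx a%:M 0.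
  rewrite /A' -!mul_usub_mx hA -scalemxAl mul_usub_mx mulmxV //.
  rewrite (scalar_mx_block (1+1) l 1) /block_mx col_mxKu scale_row_mx.
  by rewrite scaler0 scalemx1.
rewrite -[A']submxK /ulsubmx /ursubmx hu row_mxKl row_mxKr char_poly_lblock.
by rewrite char_poly_scalar2 dvdp_mulr.
Qed.

Lemma geom_helper2 n l (A : 'M[F]_n) (S : 'M[F]_(1 + 1 + l, n)) a :
  (1 + 1 + l = n)%N -> row_full S ->
  usubmx S *m A = a *: usubmx S -> (('X - a%:P) ^+ 2 %| char_poly A).
Proof. by move=> e; case: n / e in A S *; apply: geom_helper. Qed.
End Gen2.

Section Gen3.
Variable F : fieldType.
Lemma mul_rV2 m (v : 'rV[F]_(1+1)) (x y : 'rV[F]_m) :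
  v *m col_mx x y = v 0 (lshift 1 0) *: x + v 0 (rshift 1 0) *: y.
Proof.
rewrite -{1}[v]hsubmxK mul_row_col (mx11_scalar (lsubmx v)) (mx11_scalar (rsubmx v)).
by rewrite !mul_scalar_mx !mxE.
Qed.

Lemma rV2_eq0 (v : 'rV[F]_(1+1)) :
  v 0 (lshift 1 0) = 0 -> v 0 (rshift 1 0) = 0 -> v = 0.
Proof.
move=> h1 h2; rewrite -[v]hsubmxK (mx11_scalar (lsubmx v)) (mx11_scalar (rsubmx v)).
by rewrite !mxE h1 h2 !raddf0 row_mx0.
Qed.

Lemma geom_simple n (A : 'M[F]_n) a (x y : 'rV[F]_n) :
  (mup a (char_poly A) <= 1)%N -> x != 0 -> x *m A = a *: x -> y *m A = a *: y ->
  exists k, y = k *: x.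
Proof.
move=> hmu x0 hx hy; set V := col_mx x y.
have [hf|hnf] := boolP (row_free V).
  exfalso.
  have e : (1 + 1 + \rank (V^C)%MS = n)%N.
    rewrite mxrank_compl (eqP hf) subnKC //.
    by rewrite -[X in (X <= _)%N](eqP hf) rank_leq_col.
  have eqS : (col_mx V (row_base (V^C)%MS) :=: V + (V^C)%MS)%MS.
    exact: eqmx_trans (eqmx_sym (addsmxE _ _)) (adds_eqmx (eqmx_refl _) (eq_row_base _)).
  have Sfull : row_full (col_mx V (row_base (V^C)%MS)).
    by rewrite /row_full eqS; apply: addsmx_compl_full.
  have hS : usubmx (col_mx V (row_base (V^C)%MS)) *m A = a *: usubmx (col_mx V (row_base (V^C)%MS)).
    by rewrite col_mxKu /V mul_col_mx hx hy scale_col_mx.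
  have := geom_helper2 e Sfull hS.
  rewrite -mup_geq ?monic_neq0 ?char_poly_monic //.
  by move=> h; move: (leq_trans h hmu).
have : kermx V != 0 by rewrite kermx_eq0.
case/rowV0Pn => v /sub_kermxP; rewrite mul_rV2 => hv v0.
have [k1|k1] := eqVneq (v 0 (rshift 1 0)) 0.
  move: hv; rewrite k1 scale0r addr0 => /eqP; rewrite scaler_eq0 (negPf x0) orbF.
  by move=> /eqP k0; move: v0; rewrite (rV2_eq0 k0 k1) eqxx.
exists (- (v 0 (lshift 1 0) / v 0 (rshift 1 0))).
apply: (scalerI k1); rewrite scalerA mulrN mulrC divfK // scaleNr.
by apply/eqP; rewrite -subr_eq0 opprK addrC hv.
Qed.
End Gen3.

Section Gen4.
Variable F : closedFieldType.

Lemma horner_intertwine n (A M E : 'M[F]_n.+1) (p : {poly F}) :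
  E *m A = M *m E -> E *m horner_mx A p = horner_mx M p *m E.
Proof.
move=> h; elim/poly_ind: p => [|p c IH]; first by rewrite !rmorph0 mulmx0 mul0mx.
rewrite !rmorphD !rmorphM /= !horner_mx_X !horner_mx_C mulmxDr mulmxDl.
rewrite -!mulmxE mulmxA IH -!mulmxA h.
by rewrite mul_mx_scalar mul_scalar_mx.
Qed.

Lemma horner_row_eig n (A : 'M[F]_n.+1) (x : 'rV[F]_n.+1) a (p : {poly F}) :
  x *m A = a *: x -> x *m horner_mx A p = p.[a] *: x.
Proof.
move=> h; elim/poly_ind: p => [|p c IH]; first by rewrite !rmorph0 mulmx0 horner0 scale0r.
rewrite !rmorphD !rmorphM /= !horner_mx_X !horner_mx_C mulmxDr hornerMXaddC.
rewrite -!mulmxE mulmxA IH -scalemxAl h scalerA scalerDl mul_mx_scalar.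
by rewrite mulrC.
Qed.

Lemma horner_col_eig n (A : 'M[F]_n.+1) (x : 'cV[F]_n.+1) a (p : {poly F}) :
  A *m x = a *: x -> horner_mx A p *m x = p.[a] *: x.
Proof.
move=> h; elim/poly_ind: p => [|p c IH]; first by rewrite !rmorph0 mul0mx horner0 scale0r.
rewrite !rmorphD !rmorphM /= !horner_mx_X !horner_mx_C mulmxDl hornerMXaddC.
rewrite -!mulmxE -mulmxA h -scalemxAr IH scalerA scalerDl mul_scalar_mx.
by rewrite mulrC.
Qed.

Lemma horner_unit n (A : 'M[F]_n.+1) (p : {poly F}) :
  (forall z, eigenvalue A z -> ~~ root p z) -> horner_mx A p \in unitmx.
Proof.
move=> h.
have cop : coprimep p (char_poly A).
  apply/negPn/negP => ncop.
  have : size (gcdp p (char_poly A)) != 1%N by [].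
  case/closed_rootP => z; rewrite root_gcd => /andP[pz cz].
  by move: (h z); rewrite eigenvalue_root_char cz pz => /(_ isT).
case/Bezout_eq1_coprimepP: cop => [[u v]] /= huv.
have := congr1 (horner_mx A) huv.
rewrite rmorphD !rmorphM /= Cayley_Hamilton mulr0 addr0 rmorph1.
by move/mulmx1_unit => [].

Qed.
End Gen4.

Section Gen5.
Variable F : fieldType.
Lemma mx_col_eq0 m n (M : 'M[F]_(m, n)) : (forall x : 'cV_n, M *m x = 0) -> M = 0.
Proof.
move=> h; apply/matrixP => i j.
have := congr1 (fun v : 'cV_m => v i 0) (h (delta_mx j 0)).
by rewrite -colE !mxE.
Qed.

Lemma scale_neq_eq0 (x y : F) m n (M : 'M[F]_(m, n)) : x != y -> x *: M = y *: M -> M = 0.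
Proof.
move=> xy /eqP; rewrite -subr_eq0 -scalerBl scaler_eq0 subr_eq0 (negPf xy) /=.
by move/eqP.
Qed.

Lemma row_free2 n (A : 'M[F]_n) (r s : 'rV[F]_n) a b : r != 0 -> s != 0 -> a != b ->
  r *m A = a *: r -> s *m A = b *: s -> row_free (col_mx r s).
Proof.
move=> r0 s0 ab hr hs; rewrite -kermx_eq0; apply/negPn/negP.
case/rowV0Pn => v /sub_kermxP; rewrite mul_rV2 => hv v0.
set k0 := v 0 (lshift 1 0) in hv v0; set k1 := v 0 (rshift 1 0) in hv v0.
have e1 : k1 *: s = - (k0 *: r) by apply/eqP; rewrite -addr_eq0 addrC hv.
have h1 : (k0 *: r) *m A = a *: (k0 *: r) by rewrite -scalemxAl hr !scalerA mulrC.
have h2 : (k0 *: r) *m A = b *: (k0 *: r).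
  apply: oppr_inj; rewrite -mulNmx -e1 -scalerN -e1 -scalemxAl hs !scalerA mulrC.
  by [].
have := scale_neq_eq0 ab (etrans (esym h1) h2) => /eqP.
rewrite scaler_eq0 (negPf r0) orbF => /eqP k00.
move: e1; rewrite k00 scale0r oppr0 => /eqP; rewrite scaler_eq0 (negPf s0) orbF => /eqP k10.
by move: v0; rewrite (rV2_eq0 k00 k10) eqxx.
Qed.
End Gen5.

Section Cx.
Variable C : numClosedFieldType.
Lemma a_facts (w : C) : w \is Num.real -> w != 0 ->
  [/\ (w * 'i)^* = - (w * 'i), w * 'i != 0, - (w * 'i) != w * 'i,
      'Re (w * 'i) = 0 & ('X - (w * 'i)%:P) * ('X - (- (w * 'i))%:P) = 'X ^+ 2 + (w ^+ 2)%:P].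
Proof.
move=> wr w0; split.
- by rewrite rmorphM /= conj_Creal // conjCi mulrN.
- by rewrite mulf_neq0 // neq0Ci.
- apply/eqP => /eqP; rewrite -subr_eq0 -opprD oppr_eq0 -mulr2n mulrn_eq0 /=.
  by rewrite mulf_eq0 (negPf w0) (negPf (neq0Ci C)).
- by rewrite ReMir; move/Creal_ImP: wr => ->; rewrite oppr0.
- rewrite polyCN opprK -subr_sqr -[_%:P ^+ 2]rmorphXn /= exprMn sqrCi mulrN1 polyCN opprK.
  by [].
Qed.

Lemma Re_neg_noroot (p : {poly C}) z : (forall z, root p z -> 'Re z < 0) ->
  'Re z = 0 -> ~~ root p z.
Proof. by move=> hp hz; apply/negP => /hp; rewrite hz ltxx. Qed.
Lemma realmx_conj m n (A : 'M[C]_(m, n)) : map_mx conjC A = A -> A \is a realmx.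
Proof.
move=> h; apply/mxOverP => i j; rewrite CrealE.
by have := congr1 (fun M : 'M[C]_(m, n) => M i j) h; rewrite mxE => ->.
Qed.

Lemma poly_part n (B : 'M[C]_n.+1) w : B \is a realmx -> w \is Num.real -> w != 0 ->
  (forall a, eigenvalue B a -> 'Re a <= 0) ->
  (forall a, eigenvalue B a -> 'Re a = 0 -> a = w * 'i \/ a = - (w * 'i)) ->
  mup (w * 'i) (char_poly B) = 1%N -> mup (- (w * 'i)) (char_poly B) = 1%N ->
  exists2 p : {poly C}, [/\ p \is monic, size p = n, p \is a polyOver Num.real &
     char_poly B = p * ('X ^+ 2 + (w ^+ 2)%:P)] & (forall z, root p z -> 'Re z < 0).
Proof.
move=> Br wr w0 hRe hIm m1 m2.
have [ca a0 aa Rea hh] := a_facts wr w0.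
set a := w * 'i in ca a0 aa Rea hh m1 m2 *.
set h := 'X ^+ 2 + (w ^+ 2)%:P.
have chi0 : char_poly B != 0 by rewrite monic_neq0 ?char_poly_monic.
have hmon : h \is monic by rewrite /h -hh monicMl ?monicXsubC.
have h0 : h != 0 by rewrite monic_neq0.
have hdiv : h %| char_poly B.
  rewrite /h -hh Gauss_dvdp; last by rewrite coprimep_XsubC2 // -opprD oppr_eq0; apply: contra aa => /eqP e; rewrite eq_sym -addr_eq0 e.
  by rewrite !XsubC_dvd // ?m1 ?m2.
set p := char_poly B %/ h.
have ep : char_poly B = p * h by rewrite divpK.
have p0 : p != 0 by apply: contraNneq chi0 => p0; rewrite ep p0 mul0r.
exists p; first split => //.
- by rewrite -(monicMr p hmon) -ep char_poly_monic.
- have := size_char_poly B; rewrite ep size_Mmonic // /h -hh.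
  rewrite size_monicM ?monicXsubC ?polyXsubC_eq0 // !size_XsubC.
  by rewrite addnC /= => -[].
- have mB : map_mx conjC B = B by apply: realmxC.
  have : map_poly conjC p * h = p * h.
    have hc : map_poly conjC h = h.
      by rewrite rmorphD /= map_polyXn map_polyC /= rmorphXn /= conj_Creal.
    by rewrite -{1}hc -rmorphM /= -ep map_char_poly mB.
  move/(mulIf h0) => mp; apply/polyOverP => i.
  by rewrite CrealE -{2}mp coef_map.
move=> z pz.
have ez : eigenvalue B z by rewrite eigenvalue_root_char ep rootM pz.
rewrite lt_neqAle hRe // andbT; apply/eqP => Rz.
have hz : root h z.
  by rewrite /h -hh rootM !root_XsubC; case: (hIm z ez Rz) => ->; rewrite eqxx ?orbT.
have : (2 <= mup z (char_poly B))%N.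
  rewrite ep mupM // -(addn1 1) leq_add //.
    by rewrite -XsubC_dvd // -root_factor_theorem.
  by rewrite -XsubC_dvd // -root_factor_theorem.
by case: (hIm z ez Rz) => ->; rewrite ?m1 ?m2.
Qed.
End Cx.

Section Mat.
Variable C : numClosedFieldType.

Lemma conj_eigen_row n (B : 'M[C]_n) (r : 'rV_n) a : B \is a realmx ->
  r *m B = a *: r -> map_mx conjC r *m B = a^* *: map_mx conjC r.
Proof.
move=> Br hr; rewrite -{1}(realmxC Br) -map_mxM hr map_mxZ.
by [].
Qed.

Lemma conj_eigen_col n (B : 'M[C]_n) (u : 'cV_n) a : B \is a realmx ->
  B *m u = a *: u -> B *m map_mx conjC u = a^* *: map_mx conjC u.
Proof.
move=> Br hr; rewrite -{1}(realmxC Br) -map_mxM hr map_mxZ.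
by [].
Qed.

Lemma tr_eig_col n (B : 'M[C]_n) (u : 'cV_n) a :
  B *m u = a *: u -> u^T *m B^T = a *: u^T.
Proof. by move=> h; rewrite -trmx_mul h linearZ. Qed.

Lemma kern_eig n (B E : 'M[C]_n) (y : 'cV_n) l : E^T = E ->
  B^T *m E + E *m B = 0 -> B *m y = l *: y -> (E *m y)^T *m B = (- l) *: (E *m y)^T.
Proof.
move=> Es hk hy.
have hEB : E *m B = - (B^T *m E) by apply/eqP; rewrite -addr_eq0 addrC hk.
rewrite trmx_mul Es -mulmxA hEB mulmxN mulmxA -trmx_mul hy linearZ /=.
by rewrite -scalemxAl scaleNr.
Qed.

Lemma geomT n (B : 'M[C]_n) a (u y : 'cV_n) : (mup a (char_poly B) <= 1)%N ->
  u != 0 -> B *m u = a *: u -> B *m y = a *: y -> exists k, y = k *: u.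
Proof.
move=> hm u0 hu hy.
have hm' : (mup a (char_poly B^T) <= 1)%N by rewrite char_poly_trmx.
have u0' : u^T != 0 by rewrite trmx_eq0.
have [k hk] := geom_simple hm' u0' (tr_eig_col hu) (tr_eig_col hy).
by exists k; apply: trmx_inj; rewrite hk linearZ.
Qed.
End Mat.

Section Mat2.
Variable C : numClosedFieldType.

Lemma mat_part n (B : 'M[C]_n.+1) w (p : {poly C}) :
  B \is a realmx -> w \is Num.real -> w != 0 ->
  (forall a, eigenvalue B a -> 'Re a <= 0) ->
  mup (w * 'i) (char_poly B) = 1%N -> mup (- (w * 'i)) (char_poly B) = 1%N ->
  char_poly B = p * ('X ^+ 2 + (w ^+ 2)%:P) -> (forall z, root p z -> 'Re z < 0) ->
  exists P, [/\ spans_ker_LB2 B P, psd P & \rank P = 2%N].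
Proof.
move=> Br wr w0 hRe m1 m2 ep hp.
have [ca a0 aa Rea hh] := a_facts wr w0.
set a := w * 'i in ca a0 aa Rea hh m1 m2 *.
rewrite -hh in ep.
have l1 : (mup a (char_poly B) <= 1)%N by rewrite m1.
have l2 : (mup (- a) (char_poly B) <= 1)%N by rewrite m2.
have pa : ~~ root p a by apply: Re_neg_noroot.
have ra : root (char_poly B) a by rewrite ep !rootM root_XsubC eqxx !orbT.
have raT : eigenvalue B^T a by rewrite eigenvalue_trmx eigenvalue_root_char.
have {ra} : eigenvalue B a by rewrite eigenvalue_root_char.
case/eigenvalueP => r hr r0.
case/eigenvalueP: raT => u0 hu u00.
set u := u0^T.
have hu' : B *m u = a *: u by rewrite /u -[B]trmxK -trmx_mul hu linearZ.
have u0' : u != 0 by rewrite trmx_eq0.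
set rb := map_mx conjC r; set ub := map_mx conjC u.
have hrb : rb *m B = - a *: rb by rewrite -ca; apply: conj_eigen_row.
have hub : B *m ub = - a *: ub by rewrite -ca; apply: conj_eigen_col.
have rb0 : rb != 0 by rewrite map_mx_eq0.
have ub0 : ub != 0 by rewrite map_mx_eq0.
have G1 : forall z : 'rV_n.+1, z *m B = - a *: z -> exists k, z = k *: rb.
  by move=> z hz; apply: geom_simple hrb hz.
have G2 : forall z : 'rV_n.+1, z *m B = a *: z -> exists k, z = k *: r.
  by move=> z hz; apply: geom_simple hr hz.
have G3 : forall y : 'cV_n.+1, B *m y = a *: y -> exists k, y = k *: u.
  by move=> y hy; apply: geomT hu' hy.
have G4 : forall y : 'cV_n.+1, B *m y = - a *: y -> exists k, y = k *: ub.
  by move=> y hy; apply: geomT hub hy.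
have o1 : rb *m u = 0.
  by apply: (scale_neq_eq0 aa); rewrite [LHS]scalemxAl -hrb -mulmxA hu' -scalemxAr.
have o2 : r *m ub = 0.
  by apply: (scale_neq_eq0 aa); rewrite [RHS]scalemxAl -hr -mulmxA hub -scalemxAr.
have hB1 : forall b, horner_mx B ('X - b%:P) = B - b%:M.
  by move=> b; rewrite rmorphB /= horner_mx_X horner_mx_C.
have d0 : a - - a != 0 by rewrite subr_eq0 eq_sym.
have span : forall x : 'cV_n.+1, exists al be,
    horner_mx B p *m x = al *: u + be *: ub.
  move=> x; set y := horner_mx B p *m x.
  have hc : (B - a%:M) *m (B - (- a)%:M) *m horner_mx B p = 0.
    rewrite -!hB1 !mulmxE -!rmorphM mulrC -ep; exact: Cayley_Hamilton.
  set z := (B - (- a)%:M) *m y.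
  have hz : B *m z = a *: z.
    apply/eqP; rewrite -subr_eq0 -mul_scalar_mx -mulmxBl /z /y !mulmxA.
    by rewrite hc mul0mx.
  have [l hl] := G3 z hz.
  set y' := y - (l / (a - - a)) *: u.
  have hy' : B *m y' = - a *: y'.
    apply/eqP; rewrite -subr_eq0 -mul_scalar_mx -mulmxBl /y' mulmxBr -/z hl.
    rewrite -scalemxAr mulmxBl hu' mul_scalar_mx -scalerBl scalerA divfK //.
    by rewrite subrr.
  have [m hm] := G4 y' hy'.
  exists (l / (a - - a)), m; rewrite -hm /y' addrC subrK.
  by [].
have ru : r *m u = ((r *m u) 0 0)%:M by apply: mx11_scalar.
set c := (r *m u) 0 0 in ru.
have c0 : c != 0.
  apply/eqP => c0; move/eqP: r0; apply; apply: mx_col_eq0 => x.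
  have [al [be hx]] := span x.
  have := congr1 (mulmx r) hx.
  rewrite mulmxA (horner_row_eig p hr) mulmxDr -!scalemxAr ru c0 o2 raddf0.
  rewrite !scaler0 addr0 -scalemxAl => /eqP; rewrite scaler_eq0.
  by case/orP => /eqP // pa0; move: pa; rewrite /root pa0 eqxx.
set P := r^T *m rb + rb^T *m r.
have Ps : P^T = P by rewrite /P linearD /= !trmx_mul !trmxK addrC.
have rbb : map_mx conjC rb = r by apply/matrixP => i j; rewrite !mxE conjCK.
have Pr : P \is a realmx.
  apply: realmx_conj; rewrite /P map_mxD !map_mxM -!map_trmx rbb.
  by rewrite addrC.
have PL : LB2 B P = 0.
  rewrite /LB2 /P mulmxDl -!mulmxA hrb hr -!scalemxAr.
  rewrite mulmxDr !mulmxA -!trmx_mul hr hrb !linearZ /= -!scalemxAl.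
  by rewrite !scaleNr addrACA subrr addNr addr0.
have Prank : \rank P = 2%N.
  have -> : P = (col_mx r rb)^T *m col_mx rb r by rewrite tr_col_mx mul_row_col.
  rewrite mxrankMfree; last by apply: row_free2 hrb hr; rewrite // eq_sym.
  by rewrite mxrank_tr; apply/eqP; apply: row_free2 hr hrb; rewrite // eq_sym.
have P0 : P != 0 by rewrite -mxrank_eq0 Prank.
have Ppsd : psd P.
  move=> x xr; rewrite /qform.
  have hx : rb *m x = map_mx conjC (r *m x) by rewrite map_mxM (realmxC xr).
  have -> : x^T *m P *m x = (r *m x)^T *m (rb *m x) + (rb *m x)^T *m (r *m x).
    by rewrite /P mulmxDr mulmxDl !mulmxA -!trmx_mul.
  rewrite hx (mx11_scalar (r *m x)); set t := (r *m x) 0 0.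
  rewrite !mxE !big_ord1 !mxE /= !mulr1n.
  by rewrite (mulrC (conjC t)) -normCK addr_ge0 // exprn_ge0.
have Pu : P *m u = c *: rb^T.
  by rewrite /P mulmxDl -!mulmxA o1 ru mulmx0 add0r mul_mx_scalar.
exists P; split; [|exact: Ppsd|exact: Prank].
split; [by split|exact: P0|exact: PL|].
move=> Q [Qr Qs] hQ.
have := kern_eig Qs hQ hu'; case/G1 => al hal.
have Qu : Q *m u = al *: rb^T by rewrite -[Q *m u]trmxK hal linearZ.
set s := al / c; set E := Q - s *: P.
have Es : E^T = E by rewrite /E linearD linearN /= linearZ /= Qs Ps.
have EL : B^T *m E + E *m B = 0.
  rewrite /E mulmxBr mulmxBl -scalemxAr -scalemxAl addrACA -opprD -scalerDr.
  by move: hQ PL; rewrite /LB2 => -> ->; rewrite scaler0 subr0.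
have Eu : E *m u = 0.
  by rewrite /E mulmxBl -scalemxAl Pu Qu scalerA divfK // subrr.
have Eub : E *m ub = 0.
  have := kern_eig Es EL hub; rewrite opprK; case/G2 => g hg.
  have e1 : u^T *m (E *m ub) = 0.
    by rewrite mulmxA -[u^T *m E]trmxK trmx_mul trmxK Es Eu trmx0 mul0mx.
  have e2 : u^T *m (E *m ub) = (g * c)%:M.
    rewrite -[E *m ub]trmxK hg linearZ /= -scalemxAr -trmx_mul ru tr_scalar_mx.
    by rewrite scale_scalar_mx.
  have gc : g * c = 0.
    have := congr1 (fun M : 'M[C]_1 => M 0 0) (etrans (esym e2) e1).
    by rewrite !mxE /= mulr1n.
  have g0 : g = 0 by move/eqP: gc; rewrite mulf_eq0 (negPf c0) orbF => /eqP.
  by rewrite -[E *m ub]trmxK hg g0 scale0r trmx0.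
have EpB : E *m horner_mx B p = 0.
  apply: mx_col_eq0 => x; have [al' [be' hx]] := span x.
  by rewrite -mulmxA hx mulmxDr -!scalemxAr Eu Eub !scaler0 addr0.
have Eint : E *m B = (- B^T) *m E.
  by apply/eqP; rewrite mulNmx -addr_eq0 addrC EL.
have Mu : horner_mx (- B^T) p \in unitmx.
  apply: horner_unit => z /eigenvalueP [v hv v0].
  have ez : eigenvalue B (- z).
    rewrite -eigenvalue_trmx; apply/eigenvalueP; exists v => //.
    by rewrite scaleNr -hv mulmxN opprK.
  apply/negP => /hp; have := hRe _ ez; rewrite raddfN /= oppr_le0.
  by move=> h1 h2; move: (lt_le_trans h2 h1); rewrite ltxx.
have E0 : E = 0.
  by rewrite -[E](mulKmx Mu) -(horner_intertwine p Eint) EpB mulmx0.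
have QP : Q = s *: P by apply/eqP; rewrite -subr_eq0 -/E E0.
exists s => //.
have /existsP [i /existsP [j Pij]] : [exists i, [exists j, P i j != 0]].
  apply: contraR P0 => /existsPn hi; apply/eqP/matrixP => i j.
  by have /existsPn/(_ j)/negPn/eqP -> := hi i; rewrite mxE.
have -> : s = Q i j / P i j by rewrite QP mxE mulfK.
by apply: rpred_div; apply/mxOverP.
Qed.
End Mat2.

Theorem lemma4p2 (C : numClosedFieldType) (n : nat) (B : 'M[C]_n) :
  (2 <= n)%N -> B \is a realmx ->
  ( (exists2 w : C, (w \is Num.real) && (w != 0) &
       [/\ forall a, eigenvalue B a -> 'Re a <= 0,
           forall a, eigenvalue B a -> 'Re a = 0 -> a = w * 'i \/ a = - (w * 'i),
           mup (w * 'i) (char_poly B) = 1%N &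
           mup (- (w * 'i)) (char_poly B) = 1%N])
    <->
    [/\ LB1_injective B, dim_ker_LB2_eq1 B &
        exists (p : {poly C}) (b : C),
          [/\ p \is monic, size p = n.-1, p \is a polyOver Num.real, 0 < b &
              char_poly B = p * ('X ^+ 2 + b%:P)] /\
          (forall z, root p z -> 'Re z < 0)] )
  /\
  ( (exists2 w : C, (w \is Num.real) && (w != 0) &
       [/\ forall a, eigenvalue B a -> 'Re a <= 0,
           forall a, eigenvalue B a -> 'Re a = 0 -> a = w * 'i \/ a = - (w * 'i),
           mup (w * 'i) (char_poly B) = 1%N &
           mup (- (w * 'i)) (char_poly B) = 1%N])
    -> exists P, [/\ spans_ker_LB2 B P, psd P & \rank P = 2%N] ).
Proof.
case: n B => [|n] B // hn Br.
have fwd2 : forall w : C, (w \is Num.real) && (w != 0) ->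
    [/\ forall a, eigenvalue B a -> 'Re a <= 0,
        forall a, eigenvalue B a -> 'Re a = 0 -> a = w * 'i \/ a = - (w * 'i),
        mup (w * 'i) (char_poly B) = 1%N &
        mup (- (w * 'i)) (char_poly B) = 1%N] ->
    exists P, [/\ spans_ker_LB2 B P, psd P & \rank P = 2%N].
  move=> w /andP[wr w0] [hRe hIm m1 m2].
  have [p [_ _ _ ep] hp] := poly_part Br wr w0 hRe hIm m1 m2.
  exact: mat_part Br wr w0 hRe m1 m2 ep hp.
split; last by case=> w; apply: fwd2.
split.
  case=> w hw hH; have [hRe hIm m1 m2] := hH.
  case/andP: (hw) => wr w0.
  have [a_c a0 aa Rea hh] := a_facts wr w0.
  split.
  - move=> c cr hc; apply/eqP/negPn/negP => c0.
    have e0 : eigenvalue B 0 by apply/eigenvalueP; exists c => //; rewrite scale0r.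
    have := hIm 0 e0 (raddf0 _).
    by case=> /eqP; rewrite eq_sym ?oppr_eq0 (negPf a0).
  - by have [P [hP _ _]] := fwd2 w hw hH; exists P.
  have [p [pm ps pr ep] hp] := poly_part Br wr w0 hRe hIm m1 m2.
  exists p, (w ^+ 2); split => //; split => //.
  by rewrite -(real_normK wr) exprn_gt0 // normr_gt0.
case=> _ _ [p [b [[pm ps pr b0 ep] hp]]].
set w := sqrtC b.
have wr : w \is Num.real by rewrite ger0_real // sqrtC_ge0 ltW.
have w0 : w != 0 by rewrite sqrtC_eq0 lt0r_neq0.
have [a_c a0 aa Rea hh] := a_facts wr w0.
have bw : b = w ^+ 2 by rewrite /w sqrtCK.
rewrite bw -hh in ep.
set a := w * 'i in a_c a0 aa Rea hh ep *.
have Rena : 'Re (- a) = 0 by rewrite raddfN /= Rea oppr0.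
exists w; first by rewrite wr w0.
have eigR : forall z, eigenvalue B z -> (root p z) || ((z == a) || (z == - a)).
  by move=> z; rewrite eigenvalue_root_char ep !rootM !root_XsubC.
split.
- move=> z /eigR /orP [/hp /ltW //|/orP [] /eqP ->]; by rewrite ?Rea ?Rena.
- move=> z /eigR /orP [pz Rz|/orP [] /eqP ->]; [|by left|by right].
  by move: pz; rewrite (negPf (Re_neg_noroot hp Rz)).
- rewrite ep mupMr; last exact: Re_neg_noroot.
  rewrite mupMl; last by rewrite root_XsubC eq_sym.
  by rewrite -['X - a%:P]expr1 mup_XsubCX eqxx.
- rewrite ep mupMr; last exact: Re_neg_noroot.
  rewrite mupMr; last by rewrite root_XsubC.
  by rewrite -['X - (- a)%:P]expr1 mup_XsubCX eqxx.
Qed.
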